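(* Let $G_1$ and $G_2$ be topological groupoids with $G_1$ proper. Suppose that $f\colon G_1\to G_2$ is a surjective continuous groupoid morphism such that the induced map $f'\colon G_1^{(0)}\to G_2^{(0)}$ is proper. Then $G_2$ is proper.
   Context: A continuous map is proper if it is closed and has quasi-compact fibres (quasi-compact: every open cover has a finite subcover). A topological groupoid $G$ is proper if $(r,s)\colon G\to G^{(0)}\times G^{(0)}$ is proper. *)

(* Defs.v *)
From HB Require Import structures.
From mathcomp Require Import all_boot all_order.
From mathcomp Require Import all_classical topology.
Set Implicit Arguments. Unset Strict Implicit. Unset Printing Implicit Defensive.
Local Open Scope classical_set_scope.

(* A groupoid with unit space inside the arrow space G:
   composable pairs G^(2) = {(x,y) | s x = r y}, units G^(0) = range r. *)
Record groupoid (G : Type) := Groupoid {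
  gr : G -> G;
  gs : G -> G;
  gmul : G -> G -> G;
  ginv : G -> G;
  gr_r : forall x, gr (gr x) = gr x;
  gs_r : forall x, gs (gr x) = gr x;
  gr_s : forall x, gr (gs x) = gs x;
  gs_s : forall x, gs (gs x) = gs x;
  gr_mul : forall x y, gs x = gr y -> gr (gmul x y) = gr x;
  gs_mul : forall x y, gs x = gr y -> gs (gmul x y) = gs y;
  gmulA : forall x y z, gs x = gr y -> gs y = gr z ->
    gmul (gmul x y) z = gmul x (gmul y z);
  gmul_rl : forall x, gmul (gr x) x = x;
  gmul_sr : forall x, gmul x (gs x) = x;
  gr_inv : forall x, gr (ginv x) = gs x;
  gs_inv : forall x, gs (ginv x) = gr x;
  gmulV : forall x, gmul x (ginv x) = gr x;
  gmulVl : forall x, gmul (ginv x) x = gs x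
}.

Definition units (G : Type) (g : groupoid G) : set G := range (gr g).

Definition composable (G : Type) (g : groupoid G) : set (G * G) :=
  [set p | gs g p.1 = gr g p.2].

Definition topological_groupoid (G : topologicalType) (g : groupoid G) : Prop :=
  {within composable g, continuous (fun p : G * G => gmul g p.1 p.2)} /\
  continuous (ginv g).

Definition rel_closed (X : topologicalType) (A C : set X) : Prop :=
  exists D, closed D /\ C = A `&` D.

Definition proper_map (X Y : topologicalType) (A : set X) (B : set Y)
  (f : X -> Y) : Prop :=
  [/\ forall x, A x -> B (f x),
      (forall C, C `<=` A -> rel_closed A C -> rel_closed B (f @` C)) &
      (forall y, B y -> compact (A `&` f @^-1` [set y]))].

Definition proper_groupoid (G : topologicalType) (g : groupoid G) : Prop :=
  proper_map setT (units g `*` units g) (fun x => (gr g x, gs g x)).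

Definition groupoid_morphism (G1 G2 : Type) (g1 : groupoid G1)
  (g2 : groupoid G2) (f : G1 -> G2) : Prop :=
  forall x y, gs g1 x = gr g1 y ->
    gs g2 (f x) = gr g2 (f y) /\ f (gmul g1 x y) = gmul g2 (f x) (f y).

(* Main.v *)
Require Import Defs.
From mathcomp Require Import all_boot all_order.
From mathcomp Require Import all_classical topology.
Set Implicit Arguments. Unset Strict Implicit.
Local Open Scope classical_set_scope.

Definition Qu (X Y : topologicalType) (A : set X) (B : set Y) (p : X -> Y) :=
  forall F : set_system X, UltraFilter F -> F A -> forall y, B y ->
    p @ F --> y -> exists x, [/\ A x, p x = y & F --> x].

Lemma ultra_fmap (T U : Type) (f : T -> U) (F : set_system T) :
  UltraFilter F -> UltraFilter (f @ F).
Proof.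
move=> FU; split; first exact: fmap_proper_filter.
move=> G GF sfFG; rewrite predeqE => A; split; last exact: sfFG.
move=> GA; have [//|FnA] := in_ultra_setVsetC (f @^-1` A) FU.
have GnA : G (~` A) by apply: sfFG.
by have /filter_ex [? []] : G (A `&` (~` A)) by exact: filterI.
Qed.

Lemma proper_Qu (X Y : topologicalType) (A : set X) (B : set Y) (p : X -> Y) :
  proper_map A B p -> Qu A B p.
Proof.
case=> AB pcl pcpt F FU FA y By pFy.
set K := A `&` p @^-1` [set y].
have KM : forall M, F M -> K `&` closure M !=set0.
  move=> M FM; apply/set0P/negP => /eqP K0.
  have [D [cD eD]] : rel_closed B (p @` (A `&` closure M)).
    apply: pcl; first by move=> ? [].
    by exists (closure M); split => //; exact: closed_closure.
  have nDy : ~ D y.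
    move=> Dy; have : (B `&` D) y by [].
    rewrite -eD => -[c [Ac Mc] pc].
    have : (K `&` closure M) c by split => //; split.
    by rewrite K0.
  have FpD : F (p @^-1` (~` D)).
    apply: pFy; apply: open_nbhs_nbhs; split => //; by rewrite openC.
  have [a [[Aa Ma] nDa]] : (A `&` M `&` p @^-1` (~` D)) !=set0.
    by apply: (@filter_ex _ F _); apply: filterI => //; apply: filterI.
  have : (B `&` D) (p a) by rewrite -eD; exists a => //; split => //; exact: subset_closure.
  by case.
have F'F : Filter (filter_from F (fun M => K `&` closure M)).
  apply: filter_from_filter; first by exists setT; exact: filterT.
  move=> M1 M2 FM1 FM2; exists (M1 `&` M2); first exact: filterI.
  move=> z [Kz cz]; split; split => //; apply: closureS cz; by move=> ? [].
have F'P : ProperFilter (filter_from F (fun M => K `&` closure M)).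
  by apply: filter_from_proper => M FM; exact: KM.
have F'K : filter_from F (fun M => K `&` closure M) K.
  by exists setT; [exact: filterT | move=> ? []].
have [x [Kx clx]] := pcpt y By _ F'P F'K.
exists x; case: Kx => Ax pxy; split => //.
rewrite -[_ --> x]/([set z | F --> z] x) -ultra_cvg_clusterE.
rewrite clusterE => M FM.
have : closure (K `&` closure M) x.
  by move: clx; rewrite clusterE; apply; exists M.
have e := proj1 (closure_id (closure M)) (@closed_closure _ M).
move=> h; rewrite e; apply: (closureS _ h); by move=> ? [].
Qed.

Lemma Qu_proper (X Y : topologicalType) (A : set X) (B : set Y) (p : X -> Y) :
  (forall x, A x -> B (p x)) -> Qu A B p -> proper_map A B p.
Proof.
move=> AB Q; split => //.
- move=> C CA [D0 [cD0 eC]].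
  exists (closure (p @` C)); split; first exact: closed_closure.
  rewrite eqEsubset; split.
    move=> _ [c Cc <-]; split; first exact/AB/CA.
    by apply: subset_closure; exists c.
  move=> y [By cly].
  pose F0 := filter_from (nbhs y) (fun N => C `&` p @^-1` N).
  have F0F : Filter F0.
    apply: filter_from_filter; first by exists setT; exact: filterT.
    move=> N1 N2 h1 h2; exists (N1 `&` N2); first exact: filterI.
    by move=> z [Cz [? ?]]; split; split.
  have F0P : ProperFilter F0.
    apply: filter_from_proper => N hN.
    have [_ [[c Cc <-] Npc]] := cly N hN.
    by exists c.
  have [U [UU sU]] := ultraFilterLemma F0P.
  have UC : U C by apply: sU; exists setT; [exact: filterT| move=> ? []].
  have UA : U A by apply: filterS UC.
  have pU : p @ U --> y.
    by move=> N hN; apply: sU; exists N => // ? [].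
  have [x [Ax pxy Ux]] := Q U UU UA y By pU.
  have clC : closure C x.
    move=> N hN; apply: (@filter_ex _ U _); apply: filterI => //; exact: Ux.
  have D0x : D0 x by apply: cD0; apply: closureS clC; rewrite eC => ? [].
  by exists x => //; rewrite eC.
- move=> y By; rewrite compact_ultra => F FU FK.
  have FA : F A by apply: filterS FK => ? [].
  have pF : p @ F --> y.
    move=> N hN; have sub : A `&` p @^-1` [set y] `<=` p @^-1` N by move=> z [_ /= ->]; exact: nbhs_singleton.
    exact: (filterS sub FK).
  have [x [Ax pxy Fx]] := Q F FU FA y By pF.
  by exists x; split => //; split.
Qed.

Lemma Qu_prod (X1 Y1 X2 Y2 : topologicalType) (A1 : set X1) (B1 : set Y1)
  (A2 : set X2) (B2 : set Y2) (p1 : X1 -> Y1) (p2 : X2 -> Y2) :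
  Qu A1 B1 p1 -> Qu A2 B2 p2 ->
  Qu (A1 `*` A2) (B1 `*` B2) (fun z => (p1 z.1, p2 z.2)).
Proof.
move=> Q1 Q2 H HU HA [y1 y2] [By1 By2] Hy.
have HU1 := ultra_fmap fst HU.
have HU2 := ultra_fmap snd HU.
have HA1 : (fst @ H) A1 by apply: (@filterS _ H _ (A1 `*` A2)) => // ? [].
have HA2 : (snd @ H) A2 by apply: (@filterS _ H _ (A1 `*` A2)) => // ? [].
have Hy1 : p1 @ (fst @ H) --> y1.
  move=> N hN; have h : nbhs (y1, y2) (N `*` setT).
    by exists (N, setT) => //=; split => //; exact: filterT.
  have := Hy _ h; apply: (@filterS _ H); by move=> z [].
have Hy2 : p2 @ (snd @ H) --> y2.
  move=> N hN; have h : nbhs (y1, y2) (setT `*` N).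
    by exists (setT, N) => //=; split => //; exact: filterT.
  have := Hy _ h; apply: (@filterS _ H); by move=> z [].
have [a [Aa pa Ha]] := Q1 _ HU1 HA1 y1 By1 Hy1.
have [b [Bb pb Hb]] := Q2 _ HU2 HA2 y2 By2 Hy2.
exists (a, b); split => //=; first by rewrite pa pb.
move=> S [[S1 S2] /= [hS1 hS2] sS].
have : H (fst @^-1` S1 `&` snd @^-1` S2) by apply: filterI; [exact: Ha| exact: Hb].
by apply: (@filterS _ H) => -[? ?] [] ? ?; apply: sS.
Qed.

Unset Implicit Arguments. Set Strict Implicit.

Theorem proposition2p19 (G1 G2 : topologicalType)
  (g1 : groupoid G1) (g2 : groupoid G2) (f : G1 -> G2) :
  topological_groupoid g1 -> topological_groupoid g2 ->
  proper_groupoid g1 ->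
  groupoid_morphism g1 g2 f -> continuous f -> (forall y, exists x, f x = y) ->
  proper_map (units g1) (units g2) f ->
  proper_groupoid g2.
Proof.
move=> _ _ P1 mor fc fsurj pf.
have unit2 u : units g2 u -> gs g2 u = u by case=> w _ <-; rewrite gs_r.
have fU x : units g1 x -> units g2 (f x) by case: pf => h _ _; exact: h.
have Er x : f (gr g1 x) = gr g2 (f x).
  have [h1 _] := mor (gr g1 x) x (gs_r g1 x).
  by rewrite -h1 unit2 //; apply: fU; exists x.
have Es x : f (gs g1 x) = gs g2 (f x).
  have [h1 _] := mor x (gs g1 x) (esym (gr_s g1 x)).
  by rewrite h1 -[in LHS](unit2 (f (gs g1 x))) //; [rewrite -{1}(gr_s g1 x) Er gs_r | apply: fU; exists (gs g1 x) => //; rewrite gr_s].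
have Q1 := proper_Qu P1.
have Qff := Qu_prod (proper_Qu pf) (proper_Qu pf).
apply: Qu_proper.
  by move=> z _; split; [exists z | exists (gs g2 z) => //; rewrite gr_s].
move=> F FU _ [u v] Uuv Fuv.
pose W0 := filter_from F (fun M => f @^-1` M).
have W0F : Filter W0.
  apply: filter_from_filter; first by exists setT; exact: filterT.
  by move=> M1 M2 h1 h2; exists (M1 `&` M2); [exact: filterI|].
have W0P : ProperFilter W0.
  apply: filter_from_proper => M FM.
  have [y My] := @filter_ex _ F _ M FM.
  by have [x fx] := fsurj y; exists x; rewrite /= fx.
have [W [WU sW]] := ultraFilterLemma W0P.
have fWF : f @ W = F.
  apply: (@max_filter _ F FU (f @ W)).
  by move=> M FM; apply: sW; exists M.
have WU1 : ((fun x => (gr g1 x, gs g1 x)) @ W) (units g1 `*` units g1).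
  apply: (@filterS _ W _ setT); last exact: filterT.
  by move=> x _; split; [exists x | exists (gs g1 x) => //; rewrite gr_s].
have hcv : (fun z => (f z.1, f z.2)) @ ((fun x => (gr g1 x, gs g1 x)) @ W) --> (u, v).
  move=> S hS; have h := Fuv S hS; rewrite -fWF in h.
  by apply: (@filterS _ W _ _ _ _ h) => x /=; rewrite Er Es.
have [[a b] [[Ua Ub] eab Wab]] := Qff _ (ultra_fmap _ WU) WU1 (u, v) Uuv hcv.
have [x [_ phx Wx]] := Q1 W WU (@filterT _ W _) (a, b) (conj Ua Ub) Wab.
exists (f x); split => //.
  by rewrite -Er -Es; case: phx => -> ->.
rewrite -fWF => N hN; exact: Wx _ (fc x N hN).
Qed.
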